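(* Under the assumptions below, and assuming $\mu$ is sufficiently large, the data $(X_i,U_i)$ are informative for the stabilizability of $A_C$ if and only if, for every $i\in\{1,\dots,N\}$, there exists a right inverse $X_i^{+}$ of $X_i$ (i.e. $X_iX_i^{+}=I$) such that $(X_i\mathcal{D}_{11}-E_iV)X_i^{+}$ is stable (Hurwitz).
   Context: Leader–follower multi-agent system with $N$ followers. Follower $i$: $\dot x_i=A_ix_i+B_iu_i+E_iv$, $e_i=C_ix_i+D_iu_i+F_iv$, with $x_i\in\mathbb{R}^{n_i}$, $u_i\in\mathbb{R}^{m_i}$, $e_i\in\mathbb{R}^{p}$; exosystem $\dot v=Sv$, $v\in\mathbb{R}^q$. The matrices $A_i,B_i,C_i,D_i$ are unknown; $E_i,F_i,S$ are known. Distributed controller: $u_i=K_{1i}x_i+K_{2i}\eta_i$, $\dot\eta_i=S\eta_i+\mu[\sum_j a_{ij}(\eta_j-\eta_i)+a_{i0}(v-\eta_i)]$. The Laplacian of the graph (leader node 0 plus followers) is $\mathcal{L}=\begin{bmatrix}0&0\\-[a_{10},\dots,a_{N0}]^T&H\end{bmatrix}$. The closed-loop matrix is $A_C=\begin{bmatrix}A+BK_1&BK_2\\0&(I_N\otimes S)-\mu(H\otimes I_q)\end{bmatrix}$ with $A=\mathrm{blockdiag}(A_i)$, $B=\mathrm{blockdiag}(B_i)$, $K_1=\mathrm{blockdiag}(K_{1i})$, $K_2=\mathrm{blockdiag}(K_{2i})$. Data: the signals on a time interval are expanded in an orthogonal polynomial basis (e.g. Chebyshev) truncated at degree $N$; $X_i\in\mathbb{R}^{n_i\times(N+1)}$,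 $U_i$, $V$ collect the first $N+1$ coefficient vectors of $x_i,u_i,v$, and $\mathcal{D}_{11}\in\mathbb{R}^{(N+1)\times(N+1)}$ is the leading block of the basis differentiation matrix. Exact data: $X_i\mathcal{D}_{11}=A_iX_i+B_iU_i+E_iV$. The data are informative for the stabilizability of $A_C$ if every $(A,B)$ consistent with the data (i.e. $X\mathcal{D}_{11}=AX+BU+E\bar V$ with stacked data, $\bar V=1_N\otimes V$) admits $K_1,K_2,\mu$ making $A_C$ Hurwitz. Assumptions: $S$ has no eigenvalues with negative real part; the directed weighted graph is unknown but contains a directed spanning tree rooted at the leader; there exist $\varepsilon_1,\varepsilon_2>0$ with $\varepsilon_1\le|\mathcal{L}_{ij}|\le\varepsilon_2$ for all nonzero entries of $\mathcal{L}$. *)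

(* Defs.v *)
From HB Require Import structures.
From mathcomp Require Import all_boot all_order all_algebra.
From mathcomp Require Import complex.
Set Implicit Arguments. Unset Strict Implicit. Unset Printing Implicit Defensive.
Import Order.TTheory GRing.Theory Num.Theory.
Local Open Scope ring_scope.

Definition eigenC (R : rcfType) (k : nat) (M : 'M[R]_k) (z : R[i]) : bool :=
  root (char_poly (map_mx (real_complex R) M)) z.

Definition hurwitz (R : rcfType) (k : nat) (M : 'M[R]_k) : Prop :=
  forall z : R[i], eigenC M z -> complex.Re z < 0.

Definition bdiag_blk (R : rcfType) (N : nat) (p r : 'I_N -> nat)
    (F : forall i, 'M[R]_(p i, r i)) (i j : 'I_N) : 'M[R]_(p i, r j) :=
  match i =P j with
  | ReflectT e => castmx (erefl (p i), congr1 r e) (F i)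
  | ReflectF _ => 0
  end.

Definition bdiag (R : rcfType) (N : nat) (p r : 'I_N -> nat)
    (F : forall i, 'M[R]_(p i, r i)) : 'M[R]_(\sum_i p i, \sum_i r i) :=
  \mxblock_(i < N, j < N) bdiag_blk F i j.

(* Graph: a i j = weight of the edge j -> i among followers (i receives
   from j), a0 i = weight of the edge leader -> follower i.
   H is the follower block of the Laplacian L (diagonal of L over followers:
   sum of incoming weights from other followers plus the leader weight). *)
Definition lapH (R : rcfType) (N : nat) (a : 'I_N -> 'I_N -> R) (a0 : 'I_N -> R)
  : 'M[R]_N :=
  \matrix_(i, j) (if i == j then (\sum_(k < N | k != i) a i k) + a0 i
                  else - a i j).

(* Directed edges on the node set {leader = None} U followers. *)
Definition gedge (R : rcfType) (N : nat) (a : 'I_N -> 'I_N -> R) (a0 : 'I_N -> R)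
  : rel (option 'I_N) :=
  fun u v => match u, v with
             | None, Some i => 0 < a0 i
             | Some j, Some i => (j != i) && (0 < a i j)
             | _, _ => false
             end.

(* The graph contains a directed spanning tree rooted at the leader
   (equivalently: every follower is reachable from the leader). *)
Definition spanning_tree_from_leader (R : rcfType) (N : nat)
    (a : 'I_N -> 'I_N -> R) (a0 : 'I_N -> R) : Prop :=
  forall i : 'I_N, connect (gedge a a0) None (Some i).

(* Entrywise bounds on the nonzero entries of the full Laplacian
   L = [0 0; -a0 H] . *)
Definition laplacian_bounds (R : rcfType) (N : nat)
    (a : 'I_N -> 'I_N -> R) (a0 : 'I_N -> R) (eps1 eps2 : R) : Prop :=
  (forall i j, lapH a a0 i j != 0 -> eps1 <= `|lapH a a0 i j| <= eps2) /\
  (forall i, a0 i != 0 -> eps1 <= `|a0 i| <= eps2).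

Definition closed_loop (R : rcfType) (N q : nat) (n m : 'I_N -> nat)
    (A : forall i, 'M[R]_(n i)) (B : forall i, 'M[R]_(n i, m i))
    (K1 : forall i, 'M[R]_(m i, n i)) (K2 : forall i, 'M[R]_(m i, q))
    (S : 'M[R]_q) (H : 'M[R]_N) (mu : R)
  : 'M[R]_((\sum_i n i) + (\sum_(i < N) q)) :=
  block_mx (bdiag A + bdiag B *m bdiag K1) (bdiag B *m bdiag K2)
           0 (bdiag (fun _ : 'I_N => S)
              - mu *: \mxblock_(i < N, j < N) ((H i j)%:M : 'M[R]_q)).

Definition consistent (R : rcfType) (ni mi q T : nat)
    (Xi : 'M[R]_(ni, T)) (Ui : 'M[R]_(mi, T)) (V : 'M[R]_(q, T))
    (D11 : 'M[R]_T) (Ei : 'M[R]_(ni, q))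
    (Ai : 'M[R]_ni) (Bi : 'M[R]_(ni, mi)) : Prop :=
  Xi *m D11 = Ai *m Xi + Bi *m Ui + Ei *m V.

Definition informative (R : rcfType) (N q T : nat) (n m : 'I_N -> nat)
    (X : forall i, 'M[R]_(n i, T)) (U : forall i, 'M[R]_(m i, T))
    (V : 'M[R]_(q, T)) (D11 : 'M[R]_T) (E : forall i, 'M[R]_(n i, q))
    (S : 'M[R]_q) (H : 'M[R]_N) (mu : R) : Prop :=
  exists (K1 : forall i, 'M[R]_(m i, n i)) (K2 : forall i, 'M[R]_(m i, q)),
    forall (A : forall i, 'M[R]_(n i)) (B : forall i, 'M[R]_(n i, m i)),
      (forall i, consistent (X i) (U i) V D11 (E i) (A i) (B i)) ->
      hurwitz (closed_loop A B K1 K2 S H mu).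

(* Main.v *)
Require Import Defs.
From HB Require Import structures.
From mathcomp Require Import all_boot all_order all_algebra.
From mathcomp Require Import complex.
From mathcomp.algebra_tactics Require Import ring lra.
From mathcomp Require Import zify.
From Stdlib Require Import Lia IndefiniteDescription.
Import Order.TTheory GRing.Theory Num.Theory.
Local Open Scope ring_scope.
Section NormcFacts.
Variable R : rcfType.
Local Notation nc := (@Normc.normc R).

Lemma nc_ge0 (x : R[i]) : 0 <= nc x.
Proof. by case: x => a b /=; rewrite sqrtr_ge0. Qed.

Lemma Re_le_nc (x : R[i]) : complex.Re x <= nc x.
Proof.
case: x => a b /=; apply: le_trans (ler_norm a) _.
rewrite -sqrtr_sqr; apply: ler_wsqrtr; rewrite lerDl; exact: sqr_ge0.
Qed.

Lemma nc_real (r : R) : nc ((r%:C)%C) = `|r|.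
Proof. by rewrite /= expr0n /= addr0 sqrtr_sqr. Qed.

Lemma nc_sum (I : Type) (s : seq I) (P : pred I) (F : I -> R[i]) :
  nc (\sum_(i <- s | P i) F i) <= \sum_(i <- s | P i) nc (F i).
Proof.
elim/big_rec2: _ => [|i y1 y2 _ H]; first by rewrite Normc.normc0.
apply: le_trans (le_normcD _ _) _; exact: lerD.
Qed.

Lemma nc_eq0 (x : R[i]) : (nc x == 0) = (x == 0).
Proof.
apply/eqP/eqP => [/Normc.eq0_normc //|->]; exact: Normc.normc0.
Qed.

End NormcFacts.
Arguments nc_ge0 {R}.
Arguments Re_le_nc {R}.
Arguments nc_real {R}.
Arguments nc_sum {R I}.
Arguments nc_eq0 {R}.
Definition Kc {R : rcfType} (eps1 eps2 : R) := (eps2 + 1) / eps1.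
Definition cz {R : rcfType} (N : nat) (eps1 eps2 : R) :=
  eps1 / (eps2 * Kc eps1 eps2 ^+ N + 2).

Lemma Re_subC (R : rcfType) (r : R) (z : R[i]) :
  complex.Re ((r%:C)%C - z) = r - complex.Re z.
Proof. by case: z. Qed.

Lemma lapH_row (R : rcfType) (N : nat) (a : 'I_N -> 'I_N -> R) (a0 : 'I_N -> R)
  (u : 'I_N -> R[i]) j :
  \sum_k ((lapH a a0 j k)%:C)%C * u k =
  (((\sum_(k < N | k != j) a j k) + a0 j)%:C)%C * u j
   - \sum_(k < N | k != j) ((a j k)%:C)%C * u k.
Proof.
rewrite (bigD1 j) //= mxE eqxx; congr (_ + _); rewrite -sumrN.
apply: eq_bigr => k hk; rewrite mxE eq_sym (negbTE hk) rmorphN mulNr //.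
Qed.

Lemma H_bound (R : rcfType) (N : nat) (a : 'I_N -> 'I_N -> R) (a0 : 'I_N -> R)
  (eps1 eps2 : R) :
  0 < eps1 -> eps1 <= eps2 ->
  (forall i j, 0 <= a i j) -> (forall i, 0 <= a0 i) ->
  spanning_tree_from_leader a a0 ->
  laplacian_bounds a a0 eps1 eps2 ->
  forall (lam : R[i]) (u : 'I_N -> R[i]), (exists j, u j != 0) ->
  (forall j, \sum_k ((lapH a a0 j k)%:C)%C * u k = lam * u j) ->
  cz N eps1 eps2 <= complex.Re lam.
Proof.
move=> e1p e12 ha ha0 hsp [hb hb0] lam u [jn ujn] Heq.
set K := Kc eps1 eps2; set c := cz N eps1 eps2.
have K1 : 1 <= K.
  by rewrite /K /Kc ler_pdivlMr // mul1r; lra.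
have KN1 : 1 <= K ^+ N by exact: exprn_ege1.
have D0 : 0 < eps2 * K ^+ N + 2.
  have : 0 <= eps2 * K ^+ N by apply: mulr_ge0; lra.
  lra.
have cpos : 0 < c by rewrite /c /cz divr_gt0.
have ceq : c * (eps2 * K ^+ N + 2) = eps1 by rewrite /c /cz divfK // gt_eqF.
have cle : c <= eps1.
  have : c * 1 <= c * (eps2 * K ^+ N + 2).
    apply: ler_wpM2l; [lra|]. have : 0 <= eps2 * K ^+ N by apply: mulr_ge0; lra.
    lra.
  lra.
rewrite leNgt; apply/negP => Hlt.
pose nu j := Normc.normc (u j).
have nu0 j : 0 <= nu j by exact: nc_ge0.
have [j0 _ Hmax] := arg_maxP (fun j => nu j) (isT : predT jn).
set M := nu j0.
have Mmax j : nu j <= M by exact: Hmax.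
have Mpos : 0 < M.
  apply: lt_le_trans (Mmax jn); rewrite lt_def nu0 andbT /nu nc_eq0 //.
pose h i := \sum_(k < N | k != i) a i k + a0 i.
pose S i := \sum_(k < N | k != i) a i k.
have S0 i : 0 <= S i by apply: sumr_ge0 => k _.
have hS i : h i = S i + a0 i by [].
have hle i : h i <= eps2.
  have hE : lapH a a0 i i = h i by rewrite mxE eqxx.
  have [h0|hn0] := eqVneq (h i) 0; first by rewrite h0; lra.
  have := hb i i; rewrite hE => /(_ hn0) /andP [_].
  by rewrite ger0_norm // hS addr_ge0.
have aij i j : j != i -> 0 < a i j -> eps1 <= a i j.
  move=> ji ap; have hE : lapH a a0 i j = - a i j.
    by rewrite mxE eq_sym (negbTE ji).
  have := hb i j; rewrite hE oppr_eq0 gt_eqF // => /(_ isT) /andP [].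
  by rewrite normrN gtr0_norm.
have KI i : (h i - c) * nu i <= \sum_(k < N | k != i) a i k * nu k.
  have E : ((h i)%:C%C - lam) * u i = \sum_(k < N | k != i) ((a i k)%:C)%C * u k.
    have := Heq i; rewrite lapH_row => /eqP; rewrite subr_eq => /eqP H.
    by rewrite mulrBl -/(h i) H addrAC subrr add0r.
  have Hre : h i - c <= Normc.normc ((h i)%:C%C - lam).
    apply: (le_trans _ (Re_le_nc _)); rewrite Re_subC; lra.
  apply: le_trans (ler_wpM2r (nu0 i) Hre) _.
  rewrite /nu -Normc.normcM E; apply: le_trans (nc_sum _ _ _) _.
  apply: ler_sum => k _; rewrite Normc.normcM nc_real ger0_norm //.
have step i j th : j != i -> 0 < a i j -> 0 <= th -> M * (1 - th) <= nu i ->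
    eps1 * (M - nu j) <= M * (eps2 * th + c).
  move=> ji ap th0 Hi.
  have Sb : \sum_(k < N | k != i) a i k * nu k <= (S i - a i j) * M + a i j * nu j.
    rewrite /S (bigD1 j) //= [X in _ <= (X - _) * _ + _](bigD1 j) //=.
    rewrite addrAC subrr add0r addrC mulr_suml lerD2r; apply: ler_sum => k _.
    by apply: ler_wpM2l.
  have := KI i; have := aij i j ji ap; have := hle i; have := hS i.
  have := Mmax j; have := ha0 i; have := nu0 j.
  have Srest : a i j <= S i.
    rewrite /S (bigD1 j) //= lerDl; apply: sumr_ge0 => k _; exact: ha.
  move: Sb Srest Hi; set Si := S i; set hi := h i; set aa := a i j; set ni := nu i;
    set nj := nu j; set a0i := a0 i => Sb Srest Hi hSi hli e1a njM a00 ngej KIi.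
  have P1 : 0 <= (hi - c) * (ni - M * (1 - th)) by apply: mulr_ge0; lra.
  have P2 : 0 <= (aa - eps1) * (M - nj) by apply: mulr_ge0; lra.
  have P3 : 0 <= M * ((eps2 - hi) * th) by apply: mulr_ge0; [lra| apply: mulr_ge0; lra].
  have P4 : 0 <= M * (c * th) by apply: mulr_ge0; [lra| apply: mulr_ge0; lra].
  have P5 : 0 <= M * a0i by apply: mulr_ge0; lra.
  clearbody hi; subst hi; lra.
have root i th : 0 < a0 i -> 0 <= th -> M * (1 - th) <= nu i ->
    eps1 <= eps2 * th + c.
  move=> ap th0 Hi.
  have Sb : \sum_(k < N | k != i) a i k * nu k <= S i * M.
    rewrite /S mulr_suml; apply: ler_sum => k _; by apply: ler_wpM2l.
  have e1a : eps1 <= a0 i.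
    have := hb0 i; rewrite gt_eqF // => /(_ isT) /andP [].
    by rewrite gtr0_norm.
  have := KI i; have := hle i; have := hS i; have := S0 i.
  move: Sb Hi e1a; set Si := S i; set hi := h i; set ni := nu i;
    set a0i := a0 i => Sb Hi e1a Si0 hSi hli KIi.
  have P1 : 0 <= (hi - c) * (ni - M * (1 - th)) by apply: mulr_ge0; lra.
  have P3 : 0 <= M * ((eps2 - hi) * th) by apply: mulr_ge0; [lra| apply: mulr_ge0; lra].
  have P4 : 0 <= M * (c * th) by apply: mulr_ge0; [lra| apply: mulr_ge0; lra].
  have P5 : 0 <= M * (a0i - eps1) by apply: mulr_ge0; lra.
  suff G : M * eps1 <= M * (eps2 * th + c) by rewrite ler_pM2l in G.
  clearbody hi; subst hi; lra.
have eK : eps1 * K = eps2 + 1 by rewrite /K /Kc mulrC divfK // gt_eqF.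
have walk : forall p x0, path (gedge a a0) x0 p -> last x0 p = Some j0 ->
    forall j, x0 = Some j -> M * (1 - c * K ^+ size p) <= nu j.
  elim=> [|y p IH] x0 /=.
    move=> _ -> j [<-]; rewrite expr0 mulr1 -/M.
    have : 0 <= M * c by apply: mulr_ge0; lra.
    lra.
  move=> /andP [e pth] hl j ex0; subst x0.
  case: y e pth hl => [i|] //= e pth hl.
  move/andP: e => [ji ap].
  have Hi := IH (Some i) pth hl i erefl.
  have th0 : 0 <= c * K ^+ size p by apply: mulr_ge0; [lra | apply: exprn_ge0; lra].
  have st := step i j (c * K ^+ size p) ji ap th0 Hi.
  have P1 : 1 <= K ^+ size p by exact: exprn_ege1.
  rewrite exprS; move: st P1; set P := K ^+ size p => st P1.
  have Q : 0 <= M * c * (P - 1) by apply: mulr_ge0; [apply: mulr_ge0|]; lra.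
  suff G : eps1 * (M * (1 - c * (K * P))) <= eps1 * nu j.
    by rewrite ler_pM2l in G.
  have -> : eps1 * (M * (1 - c * (K * P))) = eps1 * M - M * c * (eps1 * K) * P by ring.
  rewrite eK; lra.
have := hsp j0 => /connectP [p pth pl].
case: (shortenP pth) pl => p' pth' uq _ pl.
case: p' pth' uq pl => [|y p''] //= /andP [e pth''] uq pl.
case: y e pth'' uq pl => [i|] //= e pth'' uq pl.
have Hi := walk p'' (Some i) pth'' (esym pl) i erefl.
have th0 : 0 <= c * K ^+ size p'' by apply: mulr_ge0; [lra | apply: exprn_ge0; lra].
have r := root i _ e th0 Hi.
have sz : (size p'' <= N)%N.
  have := max_card (mem [:: None, Some i & p'']).
  rewrite card_option card_ord (card_uniqP (uq : uniq [:: None, Some i & p''])) /=.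
  by rewrite ltnS => /ltnW.
have KK : K ^+ size p'' <= K ^+ N by exact: (ler_weXn2l K1 sz).
have Q : 0 <= eps2 * c * (K ^+ N - K ^+ size p'') by apply: mulr_ge0; [apply: mulr_ge0|]; lra.
lra.
Qed.
Definition sigmaS {R : rcfType} {q : nat} (S : 'M[R]_q) := \sum_i \sum_j `|S i j|.

Lemma rV_nz (F : nzRingType) (k : nat) (v : 'rV[F]_k) : v != 0 -> exists j, v 0 j != 0.
Proof.
move=> vn; apply/existsP; apply: contraR vn => /existsPn H.
by apply/eqP/rowP => j; rewrite mxE; apply/eqP/negPn/H.
Qed.

Lemma eigenC_vec (R : rcfType) (k : nat) (M : 'M[R]_k) (z : R[i]) :
  eigenC M z -> exists2 v : 'rV[R[i]]_k, v *m map_mx (real_complex R) M = z *: v & v != 0.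
Proof. by rewrite /eigenC -eigenvalue_root_char => /eigenvalueP. Qed.

Lemma S_bound (R : rcfType) (q : nat) (S : 'M[R]_q) (s : R[i]) :
  eigenC S s -> complex.Re s <= sigmaS S.
Proof.
move=> /eigenC_vec [v Hv vn].
have [jn ujn] := rV_nz _ _ _ vn.
pose nu j := Normc.normc (v 0 j).
have nu0 j : 0 <= nu j by exact: nc_ge0.
have [j0 _ Hmax] := arg_maxP (fun j => nu j) (isT : predT jn).
set M := nu j0.
have Mmax j : nu j <= M by exact: Hmax.
have Mpos : 0 < M.
  apply: lt_le_trans (Mmax jn); rewrite lt_def nu0 andbT /nu nc_eq0 //.
have E : s * v 0 j0 = \sum_i v 0 i * ((S i j0)%:C)%C.
  have := congr1 (fun A : 'M[R[i]]_(1,q) => A 0 j0) Hv; rewrite !mxE => <-.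
  by apply: eq_bigr => i _; rewrite mxE.
have H1 : Normc.normc s * M <= M * \sum_i `|S i j0|.
  rewrite -Normc.normcM E; apply: le_trans (nc_sum _ _ _) _.
  rewrite mulr_sumr; apply: ler_sum => i _.
  rewrite Normc.normcM nc_real; exact: (ler_wpM2r (normr_ge0 (S i j0)) (Mmax i)).
have H2 : Normc.normc s <= \sum_i `|S i j0|.
  by rewrite mulrC ler_pM2l in H1.
apply: le_trans (Re_le_nc s) _; apply: le_trans H2 _.
apply: ler_sum => i _; rewrite (bigD1 j0) //= lerDl; apply: sumr_ge0 => j _.
exact: normr_ge0.
Qed.
Definition gblk {T : pzRingType} {N : nat} {p r : 'I_N -> nat}
    (F : forall i, 'M[T]_(p i, r i)) (i j : 'I_N) : 'M[T]_(p i, r j) :=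
  match i =P j with
  | ReflectT e => castmx (erefl (p i), congr1 r e) (F i)
  | ReflectF _ => 0
  end.

Definition gbdiag {T : pzRingType} {N : nat} {p r : 'I_N -> nat}
    (F : forall i, 'M[T]_(p i, r i)) : 'M[T]_(\sum_i p i, \sum_i r i) :=
  \mxblock_(i < N, j < N) gblk F i j.

Lemma bdiagE (R : rcfType) (N : nat) (p r : 'I_N -> nat)
    (F : forall i, 'M[R]_(p i, r i)) : bdiag F = gbdiag F.
Proof. by []. Qed.

Section GBlk.
Variables (T : pzRingType) (N : nat).

Lemma gblk_ii (p r : 'I_N -> nat) (F : forall i, 'M[T]_(p i, r i)) i :
  gblk F i i = F i.
Proof.
rewrite /gblk; case: eqP => // e.
by rewrite (eq_irrelevance e erefl) castmx_id.
Qed.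

Lemma gblk_ij (p r : 'I_N -> nat) (F : forall i, 'M[T]_(p i, r i)) i j :
  i != j -> gblk F i j = 0.
Proof. by rewrite /gblk; case: eqP. Qed.

End GBlk.
Lemma map_mxblock (T1 T2 : Type) (f : T1 -> T2) (N1 N2 : nat) (p : 'I_N1 -> nat) (r : 'I_N2 -> nat)
  (B : forall i j, 'M[T1]_(p i, r j)) :
  map_mx f (\mxblock_(i, j) B i j) = \mxblock_(i, j) map_mx f (B i j).
Proof.
apply/mxblockP => i j; rewrite mxblockK.
by rewrite /submxblock -map_mxsub -/(submxblock _ i j) mxblockK.
Qed.

Lemma map_gbdiag (T1 T2 : pzRingType) (f : {rmorphism T1 -> T2}) (N : nat) (p r : 'I_N -> nat)
  (F : forall i, 'M[T1]_(p i, r i)) :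
  map_mx f (gbdiag F) = gbdiag (fun i => map_mx f (F i)).
Proof.
rewrite /gbdiag map_mxblock; apply/mxblockP => i j; rewrite !mxblockK.
case: (eqVneq i j) => [<-|ij]; first by rewrite !gblk_ii.
by rewrite !gblk_ij // map_mx0.
Qed.

Lemma gbdiagD (T : pzRingType) (N : nat) (p r : 'I_N -> nat)
  (A B : forall i, 'M[T]_(p i, r i)) :
  gbdiag A + gbdiag B = gbdiag (fun i => A i + B i).
Proof.
rewrite /gbdiag -mxblockD; apply/mxblockP => i j; rewrite !mxblockK.
case: (eqVneq i j) => [<-|ij]; first by rewrite !gblk_ii.
by rewrite !gblk_ij // addr0.
Qed.

Lemma gbdiagM (T : pzRingType) (N : nat) (p r s : 'I_N -> nat)
  (A : forall i, 'M[T]_(p i, r i)) (B : forall i, 'M[T]_(r i, s i)) :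
  gbdiag A *m gbdiag B = gbdiag (fun i => A i *m B i).
Proof.
rewrite /gbdiag mul_mxblock; apply/mxblockP => i j; rewrite !mxblockK.
rewrite (bigD1 i) //= big1 ?addr0 => [|k ki]; last by rewrite gblk_ij ?mul0mx // eq_sym.
rewrite gblk_ii; case: (eqVneq i j) => [<-|ij]; first by rewrite !gblk_ii.
by rewrite !gblk_ij // mulmx0.
Qed.

Lemma submxrowZ (T : pzRingType) (N m : nat) (p : 'I_N -> nat) (c : T)
  (A : 'M[T]_(m, \sum_i p i)) j : submxrow (c *: A) j = c *: submxrow A j.
Proof. by apply/matrixP => a b; rewrite !mxE. Qed.

Lemma mul_rv_gbdiag (T : pzRingType) (N : nat) (p r : 'I_N -> nat)
  (P : forall i, 'M[T]_(p i, r i)) (v : 'rV[T]_(\sum_i p i)) :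
  v *m gbdiag P = \mxrow_j (submxrow v j *m P j).
Proof.
rewrite -[v in LHS]submxrowK /gbdiag mul_mxrow_mxblock; apply: eq_mxrow => j.
rewrite (bigD1 j) //= big1 ?addr0 ?gblk_ii // => i ij.
by rewrite gblk_ij ?mulmx0.
Qed.

Lemma mul_rv_mxblock (T : comPzRingType) (N q : nat)
  (h : 'I_N -> 'I_N -> T) (v : 'rV[T]_(\sum_(i < N) q)) :
  v *m (\mxblock_(i, j) ((h i j)%:M : 'M[T]_q)) =
  \mxrow_j (\sum_i h i j *: submxrow v i).
Proof.
rewrite -[v in LHS]submxrowK mul_mxrow_mxblock; apply: eq_mxrow => j.
by apply: eq_bigr => i _; rewrite mul_mx_scalar.
Qed.

Lemma mxrow_nz (T : pzRingType) (N : nat) (p : 'I_N -> nat) (v : 'rV[T]_(\sum_i p i)) :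
  v != 0 -> exists j, submxrow v j != 0.
Proof.
move=> vn; apply/existsP; apply: contraR vn => /existsPn H.
have -> : v = \mxrow_j (0 : 'M[T]_(1, p j)).
  by rewrite -(submxrowK v); apply: eq_mxrow => j; apply/eqP/negPn/H.
by rewrite mxrow0.
Qed.

Lemma eig_gbdiag_split (F : fieldType) (N : nat) (p : 'I_N -> nat)
  (P : forall i, 'M[F]_(p i)) z :
  eigenvalue (gbdiag P) z -> exists i, eigenvalue (P i) z.
Proof.
move=> /eigenvalueP [v Hv vn]; have [j vj] := mxrow_nz _ _ _ _ vn.
exists j; apply/eigenvalueP; exists (submxrow v j) => //.
have := congr1 (fun A => submxrow A j) Hv; rewrite /= mul_rv_gbdiag mxrowK => ->.
by rewrite submxrowZ.
Qed.

Lemma eig_gbdiag_embed (F : fieldType) (N : nat) (p : 'I_N -> nat)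
  (P : forall i, 'M[F]_(p i)) z i :
  eigenvalue (P i) z -> eigenvalue (gbdiag P) z.
Proof.
move=> /eigenvalueP [w Hw wn]; apply/eigenvalueP.
pose I1 := fun k => (1%:M : 'M[F]_(p k)).
exists (\mxrow_j (w *m gblk I1 i j)).
  rewrite mul_rv_gbdiag; apply/mxrowP => j; rewrite !mxrowK submxrowZ mxrowK.
  case: (eqVneq i j) => [<-|ij]; first by rewrite !gblk_ii !mulmx1 Hw.
  by rewrite !gblk_ij // !mulmx0 mul0mx scaler0.
apply: contra wn => /eqP H; have := congr1 (fun A => submxrow A i) H.
by rewrite /= mxrowK gblk_ii mulmx1 submxrow0 => ->.
Qed.
Lemma char_poly_ublock (T : comNzRingType) n1 n2 (P : 'M[T]_n1) (Q : 'M[T]_(n1, n2))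
  (Tm : 'M[T]_n2) :
  char_poly (block_mx P Q 0 Tm) = char_poly P * char_poly Tm.
Proof.
rewrite /char_poly /char_poly_mx map_block_mx (scalar_mx_block n1 n2) map_mx0.
by rewrite opp_block_mx add_block_mx oppr0 addr0 det_ublock.
Qed.

Lemma eigenC_ublock (R : rcfType) n1 n2 (P : 'M[R]_n1) (Q : 'M[R]_(n1, n2))
  (Tm : 'M[R]_n2) z :
  eigenC (block_mx P Q 0 Tm) z = eigenC P z || eigenC Tm z.
Proof. by rewrite /eigenC map_block_mx map_mx0 char_poly_ublock rootM. Qed.

Lemma eigenCE (R : rcfType) k (M : 'M[R]_k) z :
  eigenC M z = eigenvalue (map_mx (real_complex R) M) z.
Proof. by rewrite /eigenC eigenvalue_root_char. Qed.
Lemma sylv (F : closedFieldType) (q N : nat) (S : 'M[F]_q) (G : 'M[F]_N)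
  (W : 'M[F]_(N, q)) :
  W != 0 -> W *m S = G *m W ->
  exists2 s, root (char_poly S) s & \det (G - s%:M) = 0.
Proof.
case: q S W => [|q] S W; first by rewrite thinmx0 eqxx.
move=> Wn HW.
have [r Hr] := closed_field_poly_normal (char_poly S).
rewrite (monicP (char_poly_monic S)) scale1r in Hr.
have CH := Cayley_Hamilton S; rewrite Hr in CH.
have key : forall r, W *m horner_mx S (\prod_(z <- r) ('X - z%:P)) =
                     (\prod_(z <- r) (G - z%:M)) *m W.
  elim=> [|x r' IH]; first by rewrite !big_nil rmorph1 mulmx1 mul1mx.
  rewrite !big_cons rmorphM /= -!mulmxE mulmxA rmorphB /= horner_mx_X horner_mx_C.
  rewrite mulmxBr HW mul_mx_scalar -mul_scalar_mx -mulmxBl.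
  by rewrite -[LHS]mulmxA IH mulmxA.
have := key r; rewrite CH mulmx0 => /esym.
have gen : forall r, (\prod_(z <- r) (G - z%:M)) *m W = 0 ->
    exists2 z, z \in r & \det (G - z%:M) = 0.
  elim=> [|x r' IH]; first by rewrite big_nil mul1mx => W0; rewrite W0 eqxx in Wn.
  rewrite big_cons -mulmxE -mulmxA => H0.
  have [H1|H1] := eqVneq ((\prod_(z <- r') (G - z%:M)) *m W) 0.
    by have [z zr dz] := IH H1; exists z => //; rewrite inE zr orbT.
  exists x; first by rewrite inE eqxx.
  apply/eqP; apply: contraR H1 => dn.
  have u : (G - x%:M) \in unitmx by rewrite unitmxE unitfE.
  by rewrite -(mulKmx u (\prod_(z <- r') (G - z%:M) *m W)) H0 mulmx0.
move=> /gen [z zr dz]; exists z => //.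
by rewrite Hr root_prod_XsubC.
Qed.
Arguments sylv {F q N S G W}.
Lemma map_mxblock_scalar (T1 T2 : pzRingType) (f : {rmorphism T1 -> T2}) (N q : nat)
  (h : 'I_N -> 'I_N -> T1) :
  map_mx f (\mxblock_(i < N, j < N) ((h i j)%:M : 'M[T1]_q)) =
  \mxblock_(i < N, j < N) ((f (h i j))%:M : 'M[T2]_q).
Proof. by rewrite map_mxblock; apply: eq_mxblock => i j; rewrite map_scalar_mx. Qed.

Lemma Spart (R : rcfType) (N q : nat) (S : 'M[R]_q) (H : 'M[R]_N) (mu : R) (z : R[i]) :
  0 < mu ->
  eigenC (gbdiag (fun _ : 'I_N => S) - mu *: \mxblock_(i < N, j < N) ((H i j)%:M : 'M[R]_q)) z ->
  exists s lam (u : 'I_N -> R[i]),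
    [/\ eigenC S s, exists j, u j != 0,
        forall j, \sum_k ((H j k)%:C)%C * u k = lam * u j
      & z = s - (mu%:C)%C * lam].
Proof.
move=> mup; rewrite eigenCE map_mxB map_mxZ map_gbdiag map_mxblock_scalar => /eigenvalueP [v Hv vn].
set f := real_complex R in Hv *.
move: Hv; set SC := map_mx _ S => Hv.
have [vi vi_def] : {vi : 'I_N -> 'rV_q | forall j, vi j = submxrow v j}.
  by exists (fun j => submxrow v j).
have Ej : forall j, vi j *m SC - f mu *: \sum_i f (H i j) *: vi i = z *: vi j.
  move=> j; rewrite vi_def (eq_bigr (fun i => f (H i j) *: submxrow v i)); last first.
    by move=> i _; rewrite vi_def.
  have := congr1 (fun A => submxrow A j) Hv.
  by rewrite /= mulmxBr -scalemxAr mul_rv_gbdiag mul_rv_mxblock submxrowB submxrowZ !mxrowK submxrowZ.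
pose W := \matrix_(i < N) vi i.
pose G := z%:M + f mu *: (map_mx f H)^T.
have HW : W *m SC = G *m W.
  apply/row_matrixP => j; rewrite !row_mul rowK.
  move/eqP: (Ej j); rewrite subr_eq => /eqP ->.
  apply/rowP => c; rewrite !mxE summxE.
  under eq_bigr do rewrite mxE.
  under [RHS]eq_bigr do rewrite !mxE mulrDl.
  rewrite big_split /= [X in _ = X + _](bigD1 j) //= [X in _ = _ + X + _]big1 => [|k kj]; last by rewrite eq_sym (negbTE kj) mulr0n mul0r.
  rewrite eqxx mulr1n addr0 mulr_sumr; congr (_ + _).
  by apply: eq_bigr => k _; rewrite mulrA.
have Wn : W != 0.
  have [j vj] := mxrow_nz _ _ _ _ vn; rewrite -vi_def in vj.
  apply: contra vj => /eqP W0; have := congr1 (row j) W0.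
  by rewrite rowK row0 => ->.
have [s sr /eqP /det0P [u' un Hu]] := sylv Wn HW.
have fmu0 : f mu != 0 by rewrite /f eq_complex /= eqxx andbT gt_eqF.
exists s, ((s - z) / f mu), (fun j => u' 0 j); split => //.
- exact: rV_nz.
- move=> j.
  have := congr1 (fun A : 'M_(1, N) => A 0 j) Hu.
  rewrite /G mulmxBr mulmxDr !mul_mx_scalar -scalemxAr /= !mxE.
  move/eqP; rewrite subr_eq0 => /eqP E; apply: (mulfI fmu0).
  have -> : \sum_k f (H j k) * u' 0 k = \sum_j0 u' 0 j0 * ((map_mx f H)^T) j0 j.
    by apply: eq_bigr => k _; rewrite !mxE mulrC.
  rewrite mulrA [f mu * (_ / _)]mulrC divfK //; apply: (addrI (z * u' 0 j)).
  by rewrite E mulrBl addrC subrK.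
- by rewrite [f mu * (_ / _)]mulrC divfK // opprB addrC subrK.
Qed.
Definition mu0 {R : rcfType} (N q : nat) (S : 'M[R]_q) (eps1 eps2 : R) :=
  (sigmaS S + 1) / cz N eps1 eps2.

Lemma cz_gt0 (R : rcfType) (N : nat) (eps1 eps2 : R) :
  0 < eps1 -> eps1 <= eps2 -> 0 < cz N eps1 eps2.
Proof.
move=> e1p e12; rewrite /cz divr_gt0 //.
have K1 : 1 <= Kc eps1 eps2 by rewrite /Kc ler_pdivlMr // mul1r; lra.
have : 0 <= eps2 * Kc eps1 eps2 ^+ N.
  by apply: mulr_ge0; [lra | apply: exprn_ge0; lra].
lra.
Qed.

Arguments cz_gt0 {R} N {eps1 eps2}.
Arguments H_bound {R N a a0 eps1 eps2}.
Arguments S_bound {R q S s}.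
Arguments Spart {R N q S H mu z}.

Lemma Re_sub_mul (R : rcfType) (s l : R[i]) (m : R) :
  complex.Re (s - ((m%:C)%C) * l) = complex.Re s - m * complex.Re l.
Proof. by case: s => a b; case: l => c d; rewrite /= mul0r subr0. Qed.

Lemma T_hurwitz (R : rcfType) (N q : nat) (S : 'M[R]_q) (eps1 eps2 mu : R)
  (a : 'I_N -> 'I_N -> R) (a0 : 'I_N -> R) :
  0 < eps1 -> eps1 <= eps2 ->
  (forall i j, 0 <= a i j) -> (forall i, 0 <= a0 i) ->
  spanning_tree_from_leader a a0 ->
  laplacian_bounds a a0 eps1 eps2 ->
  mu0 N q S eps1 eps2 <= mu ->
  hurwitz (gbdiag (fun _ : 'I_N => S)
           - mu *: \mxblock_(i < N, j < N) ((lapH a a0 i j)%:M : 'M[R]_q)).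
Proof.
move=> e1p e12 ha ha0 hsp hb hmu z ez.
have cp := cz_gt0 N e1p e12.
have sig0 : 0 <= sigmaS S.
  by apply: sumr_ge0 => i _; apply: sumr_ge0 => j _; exact: normr_ge0.
have Hm : sigmaS S + 1 <= mu * cz N eps1 eps2 by rewrite -ler_pdivrMr.
have mup : 0 < mu.
  apply: lt_le_trans hmu; rewrite /mu0 divr_gt0 //; lra.
have [s [lam [u [es un Hu ->]]]] := Spart mup ez.
have hl := H_bound e1p e12 ha ha0 hsp hb _ _ un Hu.
have hs := S_bound es.
rewrite Re_sub_mul.
have : 0 <= mu * (complex.Re lam - cz N eps1 eps2) by apply: mulr_ge0; lra.
lra.
Qed.
Lemma Re_add (R : rcfType) (x y : R[i]) :
  complex.Re (x + y) = complex.Re x + complex.Re y.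
Proof. by case: x; case: y. Qed.

Lemma hurwitz_tr (R : rcfType) (k : nat) (M : 'M[R]_k) :
  hurwitz M -> (0 < k)%N -> \tr M < 0.
Proof.
move=> HM kp; set MC := map_mx (real_complex R) M.
have [r Hr] := closed_field_poly_normal (char_poly MC).
rewrite (monicP (char_poly_monic MC)) scale1r in Hr.
have sz : size r = k.
  by have := size_char_poly MC; rewrite Hr size_prod_XsubC => -[].
have ht : \tr MC = \sum_(x <- r) x.
  apply: oppr_inj; rewrite -char_poly_trace // Hr -coefPn_prod_XsubC; last by move: kp; rewrite -sz; case: (size r).
  by move: (sz) => /= ->.
have -> : \tr M = complex.Re (\tr MC) by rewrite /MC trace_map_mx.
rewrite ht.
have hx : forall x, x \in r -> complex.Re x < 0.
  by move=> x xr; apply: HM; rewrite /eigenC -/MC Hr root_prod_XsubC.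
have : (0 < size r)%N by rewrite sz.
elim: r hx {Hr sz ht} => [|x r' IH] //= hx _.
rewrite big_cons Re_add.
have h1 : complex.Re x < 0 by apply: hx; rewrite mem_head.
case: r' IH hx => [|y r''] IH hx; first by rewrite big_nil /= addr0.
have := IH (fun w hw => hx w (mem_behead (s := [:: x, y & r'']) hw)) isT; lra.
Qed.

Lemma CL_eq (R : rcfType) (N q : nat) (n m : 'I_N -> nat)
    (A : forall i, 'M[R]_(n i)) (B : forall i, 'M[R]_(n i, m i))
    (K1 : forall i, 'M[R]_(m i, n i)) (K2 : forall i, 'M[R]_(m i, q))
    (S : 'M[R]_q) (H : 'M[R]_N) (mu : R) :
  closed_loop A B K1 K2 S H mu =
  block_mx (gbdiag (fun i => A i + B i *m K1 i)) (bdiag B *m bdiag K2) 0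
     (gbdiag (fun _ : 'I_N => S) - mu *: \mxblock_(i < N, j < N) ((H i j)%:M : 'M[R]_q)).
Proof. by rewrite /closed_loop !bdiagE gbdiagM gbdiagD. Qed.

Lemma hurwitz_blocks (R : rcfType) (N q : nat) (n m : 'I_N -> nat)
    (A : forall i, 'M[R]_(n i)) (B : forall i, 'M[R]_(n i, m i))
    (K1 : forall i, 'M[R]_(m i, n i)) (K2 : forall i, 'M[R]_(m i, q))
    (S : 'M[R]_q) (H : 'M[R]_N) (mu : R) :
  hurwitz (closed_loop A B K1 K2 S H mu) -> forall i, hurwitz (A i + B i *m K1 i).
Proof.
move=> Hc i z ez; apply: Hc; rewrite CL_eq eigenC_ublock; apply/orP; left.
rewrite eigenCE map_gbdiag; apply: (@eig_gbdiag_embed _ _ _ _ _ i).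
by rewrite -eigenCE.
Qed.

Lemma hurwitz_of_blocks (R : rcfType) (N q : nat) (n m : 'I_N -> nat)
    (A : forall i, 'M[R]_(n i)) (B : forall i, 'M[R]_(n i, m i))
    (K1 : forall i, 'M[R]_(m i, n i)) (K2 : forall i, 'M[R]_(m i, q))
    (S : 'M[R]_q) (H : 'M[R]_N) (mu : R) :
  (forall i, hurwitz (A i + B i *m K1 i)) ->
  hurwitz (gbdiag (fun _ : 'I_N => S) - mu *: \mxblock_(i < N, j < N) ((H i j)%:M : 'M[R]_q)) ->
  hurwitz (closed_loop A B K1 K2 S H mu).
Proof.
move=> Hb HT z; rewrite CL_eq eigenC_ublock => /orP [e|e]; last exact: HT.
move: e; rewrite eigenCE map_gbdiag => /eig_gbdiag_split [i ei].
by apply: (Hb i); rewrite eigenCE.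
Qed.

Arguments hurwitz_tr {R k M}.
Arguments hurwitz_blocks {R N q n m A B K1 K2 S H mu}.
Arguments hurwitz_of_blocks {R N q n m A B K1 K2 S H mu}.
Lemma mul_self_ge0 (R : rcfType) (x : R) : 0 <= x * x.
Proof. by rewrite -expr2 sqr_ge0. Qed.
Arguments mul_self_ge0 {R}.

Lemma trace_GGt (R : rcfType) (a b : nat) (G : 'M[R]_(a, b)) :
  \tr (G *m G^T) = \sum_i \sum_j G i j * G i j.
Proof.
by rewrite /mxtrace; apply: eq_bigr => i _; rewrite mxE; apply: eq_bigr => j _; rewrite mxE.
Qed.

Lemma GGt_eq0 (R : rcfType) (a b : nat) (G : 'M[R]_(a, b)) :
  \tr (G *m G^T) = 0 -> G = 0.
Proof.
rewrite trace_GGt => /eqP; rewrite psumr_eq0 => [/allP H|i _]; last first.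
  by apply: sumr_ge0 => j _; exact: mul_self_ge0.
apply/matrixP => i j; rewrite mxE.
have := H i (mem_index_enum i); rewrite psumr_eq0 => [/allP H2|k _]; last exact: mul_self_ge0.
by have := H2 j (mem_index_enum j); rewrite mulf_eq0 orbb => /eqP.
Qed.

Lemma trace_GGt_ge0 (R : rcfType) (a b : nat) (G : 'M[R]_(a, b)) :
  0 <= \tr (G *m G^T).
Proof.
by rewrite trace_GGt; apply: sumr_ge0 => i _; apply: sumr_ge0 => j _; exact: mul_self_ge0.
Qed.

Lemma forward (R : rcfType) (N q d : nat) (n m : 'I_N -> nat)
    (X : forall i, 'M[R]_(n i, d.+1)) (U : forall i, 'M[R]_(m i, d.+1))
    (V : 'M[R]_(q, d.+1)) (D11 : 'M[R]_(d.+1)) (E : forall i, 'M[R]_(n i, q))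
    (S : 'M[R]_q) (H : 'M[R]_N) (mu : R) :
  (forall i, exists (Ai : 'M[R]_(n i)) (Bi : 'M[R]_(n i, m i)),
        consistent (X i) (U i) V D11 (E i) Ai Bi) ->
  informative X U V D11 E S H mu ->
  (forall i, exists Xp : 'M[R]_(d.+1, n i),
        X i *m Xp = 1%:M /\ hurwitz ((X i *m D11 - E i *m V) *m Xp)).
Proof.
move=> Hcons [K1 [K2 Hinf]].
pose A0 i := proj1_sig (constructive_indefinite_description _ (Hcons i)).
pose B0 i := proj1_sig (constructive_indefinite_description _
                 (proj2_sig (constructive_indefinite_description _ (Hcons i)))).
have HA0 i : consistent (X i) (U i) V D11 (E i) (A0 i) (B0 i) :=
  proj2_sig (constructive_indefinite_description _
                 (proj2_sig (constructive_indefinite_description _ (Hcons i)))).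
pose Z i := col_mx (X i) (U i).
pose Am i := row_mx (1%:M : 'M[R]_(n i)) (K1 i)^T.
pose C i := cokermx (Z i)^T.
pose G i := Am i *m C i.
pose Xi i := C i *m (G i)^T.
pose dA i := (usubmx (Xi i))^T.
pose dB i := (dsubmx (Xi i))^T.
pose M0 i := A0 i + B0 i *m K1 i.
pose t i := \tr (G i *m (G i)^T).
pose al i := (`|\tr (M0 i)| + 1) / t i.
pose A1 i := A0 i + al i *: dA i.
pose B1 i := B0 i + al i *: dB i.
have key0 i : dA i *m X i + dB i *m U i = 0.
  rewrite -mul_row_col -tr_col_mx vsubmxK /Xi trmx_mul trmxK -mulmxA.
  by rewrite -[(C i)^T *m _]trmxK trmx_mul trmxK mulmx_coker trmx0 mulmx0.
have key1 i : dA i + dB i *m K1 i = G i *m (G i)^T.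
  have -> : dA i + dB i *m K1 i = row_mx (dA i) (dB i) *m (Am i)^T.
    by rewrite tr_row_mx trmx1 trmxK mul_row_col mulmx1.
  by rewrite -tr_col_mx vsubmxK -trmx_mul /Xi mulmxA -/(G i) trmx_mul trmxK.
have cons1 i : consistent (X i) (U i) V D11 (E i) (A1 i) (B1 i).
  rewrite /consistent (HA0 i) /A1 /B1 !mulmxDl -!scalemxAl; congr (_ + _).
  by rewrite addrACA -scalerDr key0 scaler0 addr0.
have blk1 i : A1 i + B1 i *m K1 i = M0 i + al i *: (G i *m (G i)^T).
  by rewrite /A1 /B1 mulmxDl -scalemxAl addrACA -scalerDr key1.
have H1 := hurwitz_blocks (Hinf _ _ cons1).
have H0 := hurwitz_blocks (Hinf _ _ HA0).
move=> i.
have G0 : G i = 0.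
  have [nz|np] := posnP (n i).
    by apply/matrixP => x y; have := ltn_ord x; rewrite [X in (_ < X)%N]nz.
  apply: GGt_eq0; apply/eqP; rewrite eq_le trace_GGt_ge0 andbT -/(t i).
  rewrite leNgt; apply/negP => tp.
  have := hurwitz_tr (H1 i) np; rewrite blk1 mxtraceD mxtraceZ -/(t i) /al divfK ?gt_eqF //.
  have := ler_norm (- \tr (M0 i)); rewrite normrN; lra.
have : (Am i <= (Z i)^T)%MS by rewrite submxE -/(C i) -/(G i) G0.
move=> /submxP [D HD]; exists D^T.
have HT : col_mx 1%:M (K1 i) = col_mx (X i *m D^T) (U i *m D^T).
  rewrite -mul_col_mx -/(Z i) -[Z i]trmxK -trmx_mul -HD /Am tr_row_mx trmx1 trmxK //.
have [HX HU] := eq_col_mx HT.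
split; first by rewrite -HX.
have -> : X i *m D11 - E i *m V = A0 i *m X i + B0 i *m U i by rewrite (HA0 i) addrK.
rewrite mulmxDl -!mulmxA -HX -HU mulmx1; exact: H0.
Qed.
Lemma backward (R : rcfType) (N q d : nat) (n m : 'I_N -> nat)
    (X : forall i, 'M[R]_(n i, d.+1)) (U : forall i, 'M[R]_(m i, d.+1))
    (V : 'M[R]_(q, d.+1)) (D11 : 'M[R]_(d.+1)) (E : forall i, 'M[R]_(n i, q))
    (S : 'M[R]_q) (H : 'M[R]_N) (mu : R) :
  hurwitz (gbdiag (fun _ : 'I_N => S) - mu *: \mxblock_(i < N, j < N) ((H i j)%:M : 'M[R]_q)) ->
  (forall i, exists Xp : 'M[R]_(d.+1, n i),
        X i *m Xp = 1%:M /\ hurwitz ((X i *m D11 - E i *m V) *m Xp)) ->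
  informative X U V D11 E S H mu.
Proof.
move=> HT HX.
pose Xp i := proj1_sig (constructive_indefinite_description _ (HX i)).
have HXp i : X i *m Xp i = 1%:M /\ hurwitz ((X i *m D11 - E i *m V) *m Xp i) :=
  proj2_sig (constructive_indefinite_description _ (HX i)).
exists (fun i => U i *m Xp i), (fun i => 0 : 'M[R]_(m i, q)) => A B Hc.
apply: hurwitz_of_blocks => // i.
have [h1 h2] := HXp i.
have -> : A i + B i *m (U i *m Xp i) = (X i *m D11 - E i *m V) *m Xp i.
  by rewrite (Hc i) addrK mulmxDl -!mulmxA h1 mulmx1.
exact: h2.
Qed.

Theorem theorem1 (R : rcfType) (N q : nat) (S : 'M[R]_q) (eps1 eps2 : R) :
  (forall z : R[i], eigenC S z -> 0 <= complex.Re z) ->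
  0 < eps1 -> eps1 <= eps2 ->
  exists mu0 : R, forall mu : R, mu0 <= mu ->
  forall (a : 'I_N -> 'I_N -> R) (a0 : 'I_N -> R),
    (forall i j, 0 <= a i j) -> (forall i, 0 <= a0 i) ->
    spanning_tree_from_leader a a0 ->
    laplacian_bounds a a0 eps1 eps2 ->
  forall (n m : 'I_N -> nat) (d : nat)
    (X : forall i, 'M[R]_(n i, d.+1)) (U : forall i, 'M[R]_(m i, d.+1))
    (V : 'M[R]_(q, d.+1)) (D11 : 'M[R]_(d.+1)) (E : forall i, 'M[R]_(n i, q)),
    (forall i, exists (Ai : 'M[R]_(n i)) (Bi : 'M[R]_(n i, m i)),
        consistent (X i) (U i) V D11 (E i) Ai Bi) ->
    informative X U V D11 E S (lapH a a0) mu <->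
    (forall i, exists Xp : 'M[R]_(d.+1, n i),
        X i *m Xp = 1%:M /\ hurwitz ((X i *m D11 - E i *m V) *m Xp)).
Proof.
move=> _ e1p e12; exists (mu0 N q S eps1 eps2) => mu hmu a a0 ha ha0 hsp hb
  n m d X U V D11 E Hcons; split.
  exact: forward.
apply: backward.
exact: (T_hurwitz _ _ _ _ _ _ _ _ _ e1p e12 ha ha0 hsp hb hmu).
Qed.
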